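(* Let $\omega\ge 4$ be an integer and let $\Gamma$ be a connected finite simple graph. Then $C_\omega(L(\Gamma))\cong\Gamma$ if and only if $\Gamma$ is $\omega$-regular.
   Context: $L(\Gamma)$ is the line graph of $\Gamma$: its vertices are the edges of $\Gamma$, two being adjacent iff they share an endpoint. For a graph $H$ and an integer $\omega$, the $\omega$-clique graph $C_\omega(H)$ is the graph whose vertices are the cliques (vertex sets of complete subgraphs) of order exactly $\omega$ in $H$, two distinct such cliques being adjacent iff they have nonempty intersection. *)

(* Defs.v *)
From mathcomp Require Import all_boot.
Set Implicit Arguments. Unset Strict Implicit. Unset Printing Implicit Defensive.

Definition simple_graph (T : finType) (e : rel T) : Prop :=
  symmetric e /\ irreflexive e.

Definition connected_graph (T : finType) (e : rel T) : Prop :=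
  forall x y : T, connect e x y.

Definition regular (T : finType) (e : rel T) (k : nat) : Prop :=
  forall x : T, #|[set y | e x y]| = k.

Definition graph_iso (T1 T2 : finType) (e1 : rel T1) (e2 : rel T2) : Prop :=
  exists f : T1 -> T2, bijective f /\ forall x y, e2 (f x) (f y) = e1 x y.

Definition is_edge (T : finType) (e : rel T) (A : {set T}) : bool :=
  [exists x, exists y, e x y && (A == [set x; y])].

Definition line_vertex {T : finType} (e : rel T) := {A : {set T} | is_edge e A}.

Definition line_adj {T : finType} (e : rel T) : rel (line_vertex e) :=
  fun a b => (a != b) && (val a :&: val b != set0).

Definition is_clique (V : finType) (adj : rel V) (S : {set V}) : bool :=
  [forall x in S, forall y in S, (x != y) ==> adj x y].

Definition clique_vertex {V : finType} (adj : rel V) (w : nat) :=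
  {S : {set V} | is_clique adj S && (#|S| == w)}.

Definition clique_adj {V : finType} (adj : rel V) (w : nat)
  : rel (clique_vertex adj w) :=
  fun a b => (a != b) && (val a :&: val b != set0).

Arguments line_adj {T} e _ _.
Arguments clique_adj {V} adj w _ _.

(* Main.v *)
Require Import Defs.
From mathcomp Require Import all_boot zify.
Set Implicit Arguments. Unset Strict Implicit. Unset Printing Implicit Defensive.

Definition star {T : finType} (e : rel T) (v : T) : {set line_vertex e} :=
  [set a : line_vertex e | v \in val a].
Definition deg {T : finType} (e : rel T) (v : T) := #|[set y | e v y]|.
Definition isC {T : finType} (e : rel T) (w : nat) (S : {set line_vertex e}) :=
  is_clique (line_adj e) S && (#|S| == w).
Arguments isC {T} e w S.

Lemma edge_shape {T : finType} (e : rel T) (irr : irreflexive e) (a : line_vertex e) :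
  exists x y, [/\ e x y, x != y & val a = [set x; y]].
Proof.
case: a => A /= /existsP [x /existsP [y /andP [exy /eqP ->]]].
exists x, y; split => //.
by apply/eqP => xy; move: exy; rewrite xy irr.
Qed.

Lemma pair_eq {T : finType} (x y u v : T) :
  u \in [set x; y] -> v \in [set x; y] -> u != v -> [set x; y] = [set u; v].
Proof.
rewrite !inE => /orP [] /eqP -> /orP [] /eqP -> //; rewrite ?eqxx //.
by rewrite setUC.
Qed.

Lemma two_pts {T : finType} (e : rel T) (irr : irreflexive e) (a b : line_vertex e) (u v : T) :
  u != v -> u \in val a -> v \in val a -> u \in val b -> v \in val b -> a = b.
Proof.
move=> uv.
have [x [y [_ _ ha]]] := edge_shape irr a.
have [x' [y' [_ _ hb]]] := edge_shape irr b.
rewrite ha hb => ua va ub vb; apply: val_inj.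
by rewrite ha hb (pair_eq ua va uv) (pair_eq ub vb uv).
Qed.

Lemma pts_edge {T : finType} (e : rel T) (sym : symmetric e) (irr : irreflexive e) (a : line_vertex e) (u v : T) :
  u != v -> u \in val a -> v \in val a -> e u v.
Proof.
move=> uv ua va; have [x [y [exy _ ha]]] := edge_shape irr a.
move: ua va uv; rewrite ha !inE => /orP [] /eqP -> /orP [] /eqP ->; rewrite ?eqxx // => _.
by rewrite sym.
Qed.

Lemma star_inter {T : finType} (e : rel T) (irr : irreflexive e) (u v : T) :
  u != v -> #|star e u :&: star e v| <= 1.
Proof.
move=> uv; apply/card_le1_eqP => a b; rewrite !inE => /andP [ua va] /andP [ub vb].
exact: (two_pts irr uv).
Qed.

Lemma edge_of {T : finType} (e : rel T) (u v : T) :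
  e u v -> exists a : line_vertex e, val a = [set u; v].
Proof.
move=> h.
have ie : is_edge e [set u; v] by apply/existsP; exists u; apply/existsP; exists v; rewrite h eqxx.
by exists (exist (fun A => is_edge e A) _ ie).
Qed.

Lemma card_star {T : finType} (e : rel T) (sym : symmetric e) (irr : irreflexive e) (v : T) :
  #|star e v| = deg e v.
Proof.
pose oth (a : line_vertex e) := odflt v [pick y in val a :\ v].
have Hoth : forall a, a \in star e v -> val a = [set v; oth a] /\ e v (oth a).
  move=> a; rewrite inE => va.
  have [x [y [exy xy ha]]] := edge_shape irr a.
  rewrite /oth; case: pickP => [z|].
    rewrite !inE => /andP [zv za].
    have vz : v != z by rewrite eq_sym.
    have zA : z \in [set x; y] by rewrite -ha.
    have va' : v \in [set x; y] by rewrite -ha.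
    rewrite /=; split; first by rewrite ha (pair_eq va' zA vz).
    by apply: (pts_edge sym irr vz va).
  move=> h; exfalso; move: va; rewrite ha !inE => /orP [] /eqP vE.
    by have := h y; rewrite /= !inE ha !inE eqxx orbT vE eq_sym xy.
  by have := h x; rewrite /= !inE ha !inE eqxx vE xy.
rewrite /deg -(card_in_imset (f := oth)).
  have -> : oth @: star e v = [set y | e v y]; last by [].
  apply/setP => y; rewrite [in RHS]inE; apply/imsetP/idP.
    by case=> a /Hoth [_ h] ->.
  move=> h; have [a ha] := edge_of h.
  have aS : a \in star e v by rewrite inE ha !inE eqxx.
  exists a => //; have [h1 _] := Hoth a aS.
  have : oth a \in [set v; y] by rewrite -ha h1 !inE eqxx orbT.
  rewrite !inE => /orP [] /eqP // ov.
  by move: (Hoth a aS) => [_]; rewrite ov irr.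
move=> a b /Hoth [ha _] /Hoth [hb _] eab; apply: val_inj.
by rewrite ha hb eab.
Qed.

Lemma cliqueP {V : finType} (adj : rel V) (S : {set V}) :
  reflect (forall x y, x \in S -> y \in S -> x != y -> adj x y) (is_clique adj S).
Proof.
apply: (iffP forall_inP) => [h x y xS yS xy | h x xS].
  by have /forall_inP/(_ y yS)/implyP := h x xS; apply.
by apply/forall_inP => z zS; apply/implyP; apply: h.
Qed.

Lemma clique_sub {V : finType} (adj : rel V) (S S' : {set V}) :
  is_clique adj S -> S' \subset S -> is_clique adj S'.
Proof.
move=> /cliqueP h /subsetP sub; apply/cliqueP => x y xS yS; apply: h; exact: sub.
Qed.

Lemma star_clique {T : finType} (e : rel T) (v : T) (S : {set line_vertex e}) :
  S \subset star e v -> is_clique (line_adj e) S.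
Proof.
move=> /subsetP sub; apply/cliqueP => a b aS bS ab; rewrite /line_adj ab /=.
apply/set0Pn; exists v; rewrite inE.
by have := sub a aS; have := sub b bS; rewrite !inE => -> ->.
Qed.

Lemma meet {T : finType} (e : rel T) (S : {set line_vertex e}) a b :
  is_clique (line_adj e) S -> a \in S -> b \in S -> a != b ->
  exists t, t \in val a /\ t \in val b.
Proof.
move=> /cliqueP h aS bS ab; have := h a b aS bS ab; rewrite /line_adj ab /=.
by case/set0Pn => t; rewrite inE => /andP [] ? ?; exists t.
Qed.

Lemma val_pair {T : finType} (e : rel T) (irr : irreflexive e) (b : line_vertex e) u v :
  u != v -> u \in val b -> v \in val b -> val b = [set u; v].
Proof.
move=> uv ub vb; have [x [y [_ _ hb]]] := edge_shape irr b.
by move: ub vb; rewrite hb => ub vb; rewrite (pair_eq ub vb uv).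
Qed.

Lemma card3 {V : finType} (a b c : V) : #|[set a; b; c]| <= 3.
Proof.
apply: leq_trans (leq_card_setU _ _) _; rewrite cards1 addn1 ltnS.
by apply: leq_trans (leq_card_setU _ _) _; rewrite !cards1.
Qed.

Lemma clique_center {T : finType} (e : rel T) (irr : irreflexive e) (S : {set line_vertex e}) :
  is_clique (line_adj e) S -> 4 <= #|S| -> exists c, S \subset star e c.
Proof.
move=> cl c4.
have [a aS] : exists a, a \in S by apply/card_gt0P; apply: leq_trans c4.
have [x [y [_ xy ha]]] := edge_shape irr a.
have xa : x \in val a by rewrite ha !inE eqxx.
have ya : y \in val a by rewrite ha !inE eqxx orbT.
case: (boolP (S \subset star e x)) => [h|]; first by exists x.
case/subsetPn => b bS; rewrite inE => xb.
case: (boolP (S \subset star e y)) => [h|]; first by exists y.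
case/subsetPn => c cS; rewrite inE => yc.
exfalso.
have ab : a != b by apply: contraNneq xb => <-.
have ac : a != c by apply: contraNneq yc => <-.
have yb : y \in val b.
  have [t [ta tb]] := meet cl aS bS ab.
  move: ta; rewrite ha !inE => /orP [] /eqP tE; first by rewrite -tE tb in xb.
  by rewrite -tE.
have xc : x \in val c.
  have [t [ta tc]] := meet cl aS cS ac.
  move: ta; rewrite ha !inE => /orP [] /eqP tE; last by rewrite -tE tc in yc.
  by rewrite -tE.
have bc : b != c by apply: contraNneq yc => <-.
have [z [zb zc]] := meet cl bS cS bc.
have zx : z != x by apply: contraNneq xb => <-.
have zy : z != y by apply: contraNneq yc => <-.
have [d dS dn] : exists2 d, d \in S & d \notin [set a; b; c].
  apply/subsetPn; apply: contraTN c4 => /subset_leq_card h.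
  by rewrite -ltnNge ltnS (leq_trans h (card3 a b c)).
move: dn; rewrite !inE !negb_or => /andP [/andP [da db] dc].
have hb : val b = [set y; z] by apply: val_pair; rewrite // eq_sym.
have hc : val c = [set x; z] by apply: val_pair; rewrite // eq_sym.
have [t [td ta]] := meet cl dS aS da.
move: ta; rewrite ha !inE => /orP [] /eqP tE; rewrite tE in td.
- have yd : y \notin val d.
    by apply: contra da => yd; apply/eqP; apply: (two_pts irr xy).
  have [s [sd sb]] := meet cl dS bS db.
  move: sb; rewrite hb !inE => /orP [] /eqP sE; first by rewrite -sE sd in yd.
  rewrite sE in sd.
  move/negP: dc; apply; apply/eqP; apply: (two_pts irr (u := x) (v := z)) => //.
  by rewrite eq_sym.
- have xd : x \notin val d.
    by apply: contra da => xd; apply/eqP; apply: (two_pts irr xy).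
  have [s [sd sc]] := meet cl dS cS dc.
  move: sc; rewrite hc !inE => /orP [] /eqP sE; first by rewrite -sE sd in xd.
  rewrite sE in sd.
  move/negP: db; apply; apply/eqP; apply: (two_pts irr (u := y) (v := z)) => //.
  by rewrite eq_sym.
Qed.

Lemma star_full {T : finType} (e : rel T) (irr : irreflexive e) w (S : {set line_vertex e}) :
  4 <= w -> is_clique (line_adj e) S -> #|S| = w ->
  exists c, S \subset star e c.
Proof. by move=> w4 cl cS; apply: clique_center => //; rewrite cS. Qed.

Lemma forward (w : nat) (T : finType) (e : rel T) :
  4 <= w -> symmetric e -> irreflexive e -> regular e w ->
  graph_iso (clique_adj (line_adj e) w) e.
Proof.
move=> w4 sym irr reg.
have Hs : forall v, is_clique (line_adj e) (star e v) && (#|star e v| == w).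
  by move=> v; rewrite (star_clique (subxx _)) /= (card_star sym irr) /deg reg.
pose g v : clique_vertex (line_adj e) w :=
  exist (fun S => is_clique (line_adj e) S && (#|S| == w)) (star e v) (Hs v).
have ginj : injective g.
  move=> u v /(congr1 val) /= huv; apply/eqP; apply: contraT => uv.
  have := star_inter irr uv; rewrite huv setIid (card_star sym irr) /deg reg.
  by move=> /(leq_trans w4).
have gadj : forall u v, clique_adj (line_adj e) w (g u) (g v) = e u v.
  move=> u v; rewrite /clique_adj /=.
  case: (eqVneq u v) => [->|uv]; first by rewrite eqxx irr.
  rewrite (inj_eq ginj) uv /=.
  apply/set0Pn/idP => [[a]|h].
    by rewrite !inE => /andP [ua va]; exact: (pts_edge sym irr uv ua va).
  have [a ha] := edge_of h; exists a; by rewrite !inE ha !inE !eqxx orbT.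
have gbij : bijective g.
  apply: (@inj_card_bij T {S : {set line_vertex e} | is_clique (line_adj e) S && (#|S| == w)} g ginj).
  rewrite -cardsT -(card_imset _ val_inj) -[X in _ <= X]cardsT.
  apply: leq_trans (leq_imset_card (star e) _).
  apply: subset_leq_card; apply/subsetP => S /imsetP [k _ ->].
  case: k => S0 /= /andP [cl /eqP cS].
  have [c hc] := star_full irr w4 cl cS.
  apply/imsetP; exists c => //; apply/eqP; rewrite eqEcard hc /=.
  by rewrite cS (card_star sym irr) /deg reg.
case: gbij => f gf fg; exists f; split; first by exists g.
by move=> x y; rewrite -gadj !fg.
Qed.

Lemma subset_size {X : finType} (A : {set X}) k :
  k <= #|A| -> exists B : {set X}, B \subset A /\ #|B| = k.
Proof.
move=> kA; exists [set x in take k (enum A)]; split.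
  by apply/subsetP => x; rewrite inE => /mem_take; rewrite mem_enum.
rewrite cardsE.
have /card_uniqP -> : uniq (take k (enum A)) by apply/take_uniq/enum_uniq.
by rewrite size_takel // -cardE.
Qed.

Lemma share {X : finType} (A S K : {set X}) :
  S \subset A -> K \subset A -> #|A| < #|S| + #|K| -> S :&: K != set0.
Proof.
move=> SA KA lt; apply/eqP => h; move: lt; rewrite -cardsUI h cards0 addn0.
by rewrite ltnNge subset_leq_card // subUset SA KA.
Qed.

Lemma LB (w : nat) (T : finType) (e : rel T)
  (f : clique_vertex (line_adj e) w -> T) :
  bijective f ->
  (forall x y, e (f x) (f y) = clique_adj (line_adj e) w x y) ->
  forall (k : clique_vertex (line_adj e) w) (F : {set {set line_vertex e}}),
  (forall S, S \in F -> [/\ isC e w S, S != val k & S :&: val k != set0]) ->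
  #|F| <= deg e (f k).
Proof.
move=> fb hf k F hF.
pose X := [set k' : {S : {set line_vertex e} | is_clique (line_adj e) S && (#|S| == w)} | val k' \in F].
have -> : F = val @: X.
  apply/setP => S; apply/idP/imsetP => [SF|[k' k'X ->]]; last by rewrite inE in k'X.
  have [h1 _ _] := hF S SF.
  by exists (exist (fun S => is_clique (line_adj e) S && (#|S| == w)) S h1); rewrite // inE.
rewrite (card_imset _ val_inj) -(card_imset _ (bij_inj fb)).
apply: subset_leq_card; apply/subsetP => y /imsetP [k' k'X ->].
rewrite inE hf /clique_adj.
rewrite inE in k'X; have [_ ne ne0] := hF _ k'X.
by rewrite setIC ne0 andbT; apply: contraNneq ne => ->.
Qed.

Lemma clique_containing {T : finType} (e : rel T) (sym : symmetric e) (irr : irreflexive e)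
  w (u : T) (a : line_vertex e) :
  0 < w -> w <= deg e u -> a \in star e u ->
  exists C : {set line_vertex e}, [/\ a \in C, C \subset star e u & #|C| = w].
Proof.
move=> w0 wd au.
have : w.-1 <= #|star e u :\ a|.
  move: wd; rewrite -(card_star sym irr) (cardsD1 a) au add1n => wd.
  by rewrite -ltnS prednK.
case/subset_size => B [Bs Bc].
exists (a |: B); split; first by rewrite !inE eqxx.
  rewrite subUset sub1set au /=; apply: subset_trans Bs _; exact: subD1set.
rewrite cardsU1 Bc.
have -> : a \notin B by apply/negP => /(subsetP Bs); rewrite !inE eqxx.
by rewrite add1n prednK.
Qed.

Lemma not_sub {T : finType} (e : rel T) (irr : irreflexive e) (u y : T) (C : {set line_vertex e}) :
  u != y -> C \subset star e u -> 1 < #|C| -> ~~ (C \subset star e y).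
Proof.
move=> uy Cu C1; apply/negP => Cy.
have := star_inter irr uy; rewrite leqNgt => /negP; apply.
apply: leq_trans C1 _; apply: subset_leq_card; by rewrite subsetI Cu Cy.
Qed.

Lemma cardD1w {X : finType} (K : {set X}) b w : b \in K -> #|K| = w -> #|K :\ b| = w.-1.
Proof. by move=> bK Kc; rewrite -Kc (cardsD1 b K) bK. Qed.

Lemma noA (w : nat) (T : finType) (e : rel T) :
  4 <= w -> symmetric e -> irreflexive e ->
  forall f : clique_vertex (line_adj e) w -> T, bijective f ->
  (forall x y, e (f x) (f y) = clique_adj (line_adj e) w x y) ->
  forall v, (forall u, deg e u <= deg e v) -> w.+2 <= deg e v -> False.
Proof.
move=> w4 sym irr f fb hf v vmax dv.
have [K [Ks Kc]] : exists K : {set line_vertex e}, K \subset star e v /\ #|K| = w.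
  by apply: subset_size; rewrite (card_star sym irr); apply: leq_trans dv; rewrite leqW.
have KC : is_clique (line_adj e) K && (#|K| == w) by rewrite (star_clique Ks) Kc eqxx.
pose k0 := exist (fun S => is_clique (line_adj e) S && (#|S| == w)) K KC.
pose fp (p : line_vertex e * line_vertex e) := (K :\ p.1) :|: [set p.2].
pose F := fp @: setX K (star e v :\: K).
have cardF : #|F| = w * (deg e v - w).
  rewrite card_in_imset.
    by rewrite cardsX Kc (cardsDS Ks) (card_star sym irr) Kc.
  move=> [b a] [b' a']; rewrite !inE /= => /andP [bK /andP [aK av]] /andP [b'K /andP [a'K a'v]].
  rewrite /fp /= => eq.
  have ea : a = a'.
    have : a \in K :\ b' :|: [set a'] by rewrite -eq !inE eqxx orbT.
    by rewrite !inE (negbTE aK) andbF /= => /eqP.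
  have eb : b = b'.
    apply/eqP; apply: contraT => bb'.
    have : b \in K :\ b :|: [set a] by rewrite eq !inE bb' bK.
    rewrite !inE eqxx /= => /eqP ba.
    by move: aK; rewrite -ba bK.
  by rewrite ea eb.
have hF : forall S, S \in F -> [/\ isC e w S, S != val k0 & S :&: val k0 != set0].
  move=> S /imsetP [[b a]]; rewrite !inE /= => /andP [bK /andP [aK av]] ->.
  rewrite /fp /=.
  have Kb := cardD1w bK Kc.
  split.
  - rewrite /isC (star_clique (v := v)) /=; last first.
      rewrite subUset sub1set inE av andbT; apply: subset_trans Ks; exact: subD1set.
    rewrite setUC cardsU1 Kb !inE (negbTE aK) andbF /=.
    by rewrite add1n prednK // (leq_trans _ w4).
  - apply/negP => /eqP h.
    have : a \in K by rewrite -h !inE eqxx orbT.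
    by rewrite (negbTE aK).
  - have [c cK] : exists c, c \in K :\ b.
      by apply/card_gt0P; rewrite Kb -ltnS prednK (leq_trans _ w4).
    by apply/set0Pn; exists c; move: cK; rewrite !inE => /andP [-> ->].
have := LB fb hf hF; rewrite cardF => h.
have := leq_trans h (vmax (f k0)).
move: dv w4; clear; move: (deg e v) => d; move=> dv w4 h.
have : w * (d - w) >= (w - 1) * (d - w) + (d - w) by rewrite -mulSnr subn1 prednK // (leq_trans _ w4).
nia.
Qed.

Lemma lemX (w : nat) (T : finType) (e : rel T) :
  4 <= w -> symmetric e -> irreflexive e ->
  forall f : clique_vertex (line_adj e) w -> T, bijective f ->
  (forall x y, e (f x) (f y) = clique_adj (line_adj e) w x y) ->
  (forall u, deg e u <= w.+1) ->
  forall y u1 u2, deg e y = w.+1 -> u1 != u2 -> e y u1 -> e y u2 ->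
  w <= deg e u1 -> w <= deg e u2 -> False.
Proof.
move=> w4 sym irr f fb hf hmax y u1 u2 dy u12 e1 e2 d1 d2.
have w0 : 0 < w by apply: leq_trans w4.
have w1 : 1 < w by apply: leq_trans w4.
have [a1 ha1] := edge_of e1.
have [a2 ha2] := edge_of e2.
have a1y : a1 \in star e y by rewrite inE ha1 !inE eqxx.
have a2y : a2 \in star e y by rewrite inE ha2 !inE eqxx.
have a1u : a1 \in star e u1 by rewrite inE ha1 !inE eqxx orbT.
have a2u : a2 \in star e u2 by rewrite inE ha2 !inE eqxx orbT.
have u1y : u1 != y by apply: contraTneq e1 => ->; rewrite irr.
have u2y : u2 != y by apply: contraTneq e2 => ->; rewrite irr.
have sy : #|star e y| = w.+1 by rewrite (card_star sym irr).
have [x0 x0s x0n] : exists2 x0, x0 \in star e y & x0 \notin [set a1; a2].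
  apply/subsetPn; apply/negP => /subset_leq_card; rewrite sy cards2 ltnS => h.
  by have := leq_trans w1 (leq_trans h (leq_b1 _)).
move: x0n; rewrite !inE negb_or => /andP [x01 x02].
pose K := star e y :\ x0.
have Kc : #|K| = w by rewrite (cardD1w x0s sy).
have Ks : K \subset star e y by apply: subD1set.
have KC : is_clique (line_adj e) K && (#|K| == w) by rewrite (star_clique Ks) Kc eqxx.
pose k0 := exist (fun S => is_clique (line_adj e) S && (#|S| == w)) K KC.
have [C1 [C1a C1s C1c]] := clique_containing sym irr w0 d1 a1u.
have [C2 [C2a C2s C2c]] := clique_containing sym irr w0 d2 a2u.
have C1y : ~~ (C1 \subset star e y) by apply: (not_sub irr u1y C1s); rewrite C1c.
have C2y : ~~ (C2 \subset star e y) by apply: (not_sub irr u2y C2s); rewrite C2c.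
have C12 : C1 != C2.
  apply/negP => /eqP h; have := not_sub irr u12 C1s; rewrite C1c => /(_ w1).
  by rewrite h C2s.
pose F1 := [set star e y :\ b | b in K].
pose F := F1 :|: [set C1; C2].
have F1s : forall S, S \in F1 -> S \subset star e y.
  by move=> S /imsetP [b _ ->]; apply: subD1set.
have cF1 : #|F1| = w.
  rewrite card_in_imset ?Kc // => b b' bK b'K h.
  apply/eqP; apply: contraT => bb'.
  have : b \in star e y :\ b' by rewrite in_setD1 bb' (subsetP Ks _ bK).
  by rewrite -h !inE eqxx.
have cF : #|F| = w.+2.
  have := cardsUI F1 [set C1; C2]; rewrite cF1 cards2 C12.
  have -> : F1 :&: [set C1; C2] = set0.
    apply/setP => S; rewrite !inE; apply/negP => /andP [/F1s SS /orP [] /eqP Se].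
      by move: C1y; rewrite -Se SS.
    by move: C2y; rewrite -Se SS.
  by rewrite cards0 addn0 addn2.
have hF : forall S, S \in F -> [/\ isC e w S, S != val k0 & S :&: val k0 != set0].
  move=> S; rewrite inE => /orP [SF1|].
    have SS := F1s S SF1.
    move: SF1 => /imsetP [b bK ->].
    have bs : b \in star e y := subsetP Ks _ bK.
    split.
    - by rewrite /isC (star_clique (subD1set _ _)) (cardD1w bs sy) eqxx.
    - apply/negP => /eqP h.
      have : x0 \in star e y :\ b.
        rewrite in_setD1 x0s andbT; apply: contraTneq bK => <-; by rewrite /K in_setD1 eqxx.
      by rewrite h /= !inE eqxx.
    - apply: (share (A := star e y)); [exact: subD1set | exact: Ks | ].
      by rewrite sy (cardD1w bs sy) Kc /= -addn2 leq_add2l.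
  rewrite !inE => /orP [] /eqP ->.
  - split.
    + by rewrite /isC (star_clique C1s) C1c eqxx.
    + by apply: contraNneq C1y => /= ->.
    + apply/set0Pn; exists a1; by rewrite in_setI C1a /= /K in_setD1 a1y andbT eq_sym x01.
  - split.
    + by rewrite /isC (star_clique C2s) C2c eqxx.
    + by apply: contraNneq C2y => /= ->.
    + apply/set0Pn; exists a2; by rewrite in_setI C2a /= /K in_setD1 a2y andbT eq_sym x02.
have := LB fb hf hF; rewrite cF => h.
by have := leq_trans h (hmax (f k0)); rewrite ltnn.
Qed.

Lemma lift_card (w : nat) (T : finType) (e : rel T) (F : {set {set line_vertex e}}) :
  (forall S, S \in F -> isC e w S) ->
  #|[set k : {S : {set line_vertex e} | is_clique (line_adj e) S && (#|S| == w)} | val k \in F]| = #|F|.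
Proof.
move=> hF; rewrite -(card_imset _ val_inj).
apply: eq_card => S; apply/imsetP/idP => [[k' k'X ->]|SF]; first by rewrite inE in k'X.
by exists (exist (fun S => is_clique (line_adj e) S && (#|S| == w)) S (hF S SF)); rewrite // inE.
Qed.

Lemma noB (w : nat) (T : finType) (e : rel T) :
  4 <= w -> symmetric e -> irreflexive e -> connected_graph e ->
  forall f : clique_vertex (line_adj e) w -> T, bijective f ->
  (forall x y, e (f x) (f y) = clique_adj (line_adj e) w x y) ->
  (forall u, deg e u <= w.+1) ->
  forall v, deg e v = w.+1 -> False.
Proof.
move=> w4 sym irr conn f fb hf hmax v dv.
have w1 : 1 < w by apply: leq_trans w4.
have sv : #|star e v| = w.+1 by rewrite (card_star sym irr).
pose G := [set star e v :\ x | x in star e v].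
have hG : forall S, S \in G -> isC e w S.
  move=> S /imsetP [x xs ->].
  by rewrite /isC (star_clique (subD1set _ _)) (cardD1w xs sv) eqxx.
have cG : #|G| = w.+1.
  rewrite card_in_imset ?sv // => b b' bK b'K h.
  apply/eqP; apply: contraT => bb'.
  have : b \in star e v :\ b' by rewrite in_setD1 bb' bK.
  by rewrite -h !inE eqxx.
pose X := [set k : {S : {set line_vertex e} | is_clique (line_adj e) S && (#|S| == w)} | val k \in G].
have cX : #|X| = w.+1 by rewrite lift_card.
have adj : forall k k', k \in X -> k' \in X -> k != k' -> e (f k) (f k').
  move=> k k' kX k'X kk'; rewrite hf /clique_adj kk' /=.
  rewrite inE in kX; rewrite inE in k'X.
  move: kX k'X => /imsetP [x xs ->] /imsetP [x' x's ->].
  apply: (share (A := star e v)); [exact: subD1set | exact: subD1set |].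
  by rewrite sv (cardD1w xs sv) (cardD1w x's sv) /= -addn2 leq_add2l.
pose Y := f @: X.
have cY : #|Y| = w.+1 by rewrite card_imset ?cX //; exact: bij_inj.
have subY : forall y, y \in Y -> Y :\ y \subset [set z | e y z].
  move=> y /imsetP [k kX ->]; apply/subsetP => z; rewrite !inE => /andP [zy /imsetP [k' k'X ze]].
  rewrite ze in zy *; apply: adj => //; apply: contraNneq zy => ->; exact: eqxx.
have lowY : forall y, y \in Y -> w <= deg e y.
  move=> y yY; rewrite /deg -[w]/(w.+1.-1) -cY -(cardD1w yY erefl).
  exact: subset_leq_card (subY y yY).
have degY : forall y, y \in Y -> deg e y = w.
  move=> y yY; apply/eqP; rewrite eqn_leq lowY // andbT.
  have := hmax y; rewrite leq_eqVlt ltnS => /orP [/eqP dy|//].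
  have : 1 < #|Y :\ y| by rewrite (cardD1w yY cY).
  case/card_gt1P => u1 [u2 [u1Y u2Y u12]].
  have e1 : e y u1 by have := subsetP (subY y yY) u1 u1Y; rewrite inE.
  have e2 : e y u2 by have := subsetP (subY y yY) u2 u2Y; rewrite inE.
  move: u1Y u2Y; rewrite !in_setD1 => /andP [_ u1Y] /andP [_ u2Y].
  by have := lemX w4 sym irr fb hf hmax dy u12 e1 e2 (lowY _ u1Y) (lowY _ u2Y).
have NY : forall y, y \in Y -> [set z | e y z] = Y :\ y.
  move=> y yY; apply/esym/eqP; rewrite eqEcard subY //=.
  by rewrite (cardD1w yY cY) -/(deg e y) degY.
have cl : closed e (mem Y).
  move=> x z exz; apply/idP/idP => [xY|zY].
    have : z \in [set z | e x z] by rewrite inE.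
    by rewrite NY // in_setD1 => /andP [].
  have : x \in [set x | e z x] by rewrite inE sym.
  by rewrite NY // in_setD1 => /andP [].
have [y0 y0Y] : exists y0, y0 \in Y by apply/card_gt0P; rewrite cY.
have vY : v \in Y by rewrite -(closed_connect cl (conn y0 v)).
by move: dv; rewrite degY // => /eqP; rewrite -[_ == _]/(w == w.+1) eqn_leq ltnn andbF.
Qed.

Lemma final (w : nat) (T : finType) (e : rel T) :
  4 <= w -> symmetric e -> irreflexive e ->
  forall f : clique_vertex (line_adj e) w -> T, bijective f ->
  (forall u, deg e u <= w) -> regular e w.
Proof.
move=> w4 sym irr f fb hle.
pose D := [set c | deg e c == w].
have hk : forall k : {S : {set line_vertex e} | is_clique (line_adj e) S && (#|S| == w)},
    val k \in star e @: D.
  case=> S /= /andP [cl /eqP cS]; have [c hc] := star_full irr w4 cl cS.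
  have le : #|star e c| <= #|S| by rewrite cS (card_star sym irr) hle.
  have : S == star e c by rewrite eqEcard hc le.
  move/eqP => Se; apply/imsetP; exists c => //.
  by rewrite inE -(card_star sym irr) -Se cS.
have : #|T| <= #|D|.
  rewrite -(@bij_eq_card {S : {set line_vertex e} | is_clique (line_adj e) S && (#|S| == w)} T f fb).
  rewrite -cardsT -(card_imset _ val_inj).
  apply: leq_trans (leq_imset_card (star e) _).
  apply: subset_leq_card; apply/subsetP => S /imsetP [k _ ->]; exact: hk.
move=> TD.
have DT : D = setT by apply/eqP; rewrite eqEcard subsetT cardsT.
move=> x; have : x \in D by rewrite DT inE.
by rewrite inE => /eqP.
Qed.

Unset Implicit Arguments.

Theorem theorem5 (w : nat) (T : finType) (e : rel T) :
  4 <= w ->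
  simple_graph e ->
  connected_graph e ->
  graph_iso (clique_adj (line_adj e) w) e <-> regular e w.
Proof.
move=> w4 [sym irr] conn; split; last exact: forward.
case=> f [fb hf].
have hA : forall u, deg e u <= w.+1.
  move=> u; rewrite leqNgt; apply/negP => du.
  case: (@arg_maxnP T u predT (deg e) isT) => v _ vmax.
  apply: (noA w4 sym irr fb hf (v := v)) => [x|]; first exact: vmax.
  exact: leq_trans du (vmax u isT).
have hB : forall u, deg e u <= w.
  move=> u; have := hA u; rewrite leq_eqVlt ltnS => /orP [/eqP du|//].
  by have := noB w4 sym irr conn fb hf hA du.
exact (final w4 sym irr fb hB).
Qed.
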